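(* Let $\Lambda=kQ/I(n;n',n'';V)$ with $m=\min(n',n'')$, $d=\dim_kV/(\beta^m)$, and suppose $V$ is an ideal of $k[\beta]$, i.e. $V=(\beta^{m-d})$, and that $\delta=\gcd(n,n',n'')$ divides $d$. Then $$\dim_k\mathrm{HH}^1(\Lambda)=(n-1)+(m-1)+c>0.$$ In particular, if $m=1$ then $\dim_k\mathrm{HH}^1(\Lambda)=n-1$.
   Context: $k$ is a field; $Q$ is the quiver with vertices $1,2,3$ and arrows $\alpha\colon 2\to1$, $\beta\colon 2\to 2$, $\gamma\colon 3\to 2$; $kQ$ is generated by pairwise orthogonal idempotents $e_1,e_2,e_3$ (sum $1$) and $\alpha,\beta,\gamma$ with $e_1\alpha=\alpha=\alpha e_2$, $e_2\beta=\beta=\beta e_2$, $e_3\gamma=\gamma=\gamma e_2$, $\gamma\alpha=\beta\alpha=\gamma\beta=0$; for $v=\sum_iv_i\beta^i\in k[\beta]$, $\alpha v\gamma=\sum_iv_i\alpha\beta^i\gamma$. For integers $n\ge 2$, $1\le n',n''\le n$, $m=\min(n',n'')$ and a $k$-subspace $V\subseteq k[\beta]$ containing $(\beta^m)$, $I(n;n',n'';V)$ is the two-sided ideal of $kQ$ generated by $\alpha\beta^{n'}$, $\beta^n$, $\beta^{n''}\gamma$ and all $\alpha v\gamma$, $v\in V$. $c=1$ if $\delta=0$ in $k$ and $c=0$ otherwise. $\mathrm{HH}^1(\Lambda)=\mathrm{Der}_k(\Lambda,\Lambda)/\mathrm{Inn}(\Lambda)$. *)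

(* Defs.v *)
From HB Require Import structures.
From mathcomp Require Import all_boot all_order all_algebra.
Set Implicit Arguments. Unset Strict Implicit. Unset Printing Implicit Defensive.
Import GRing.Theory.
Local Open Scope ring_scope.

(* Vertices 1,2,3 are the indices 0,1,2.
   Ambient type: 3x3 matrices over k[x]; the path algebra kQ is the set of
   matrices  [[a1, q, s], [0, p, r], [0, 0, a3]]  with a1,a3 constants, which
   stands for  a1 e1 + a3 e3 + p(beta) + alpha q(beta) + r(beta) gamma
   + alpha s(beta) gamma  (the k-span of the paths e1,e2,e3, beta^i,
   alpha beta^i, beta^i gamma, alpha beta^i gamma).  Multiplication of paths
   is matrix multiplication (target vertex = row index). *)
Section PathAlg.
Variable k : fieldType.

Definition Mat := 'M[{poly k}]_3.

Definition i0 : 'I_3 := @Ordinal 3 0 isT.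
Definition i1 : 'I_3 := @Ordinal 3 1 isT.
Definition i2 : 'I_3 := @Ordinal 3 2 isT.

Definition kscale (c : k) (x : Mat) : Mat := c%:P *: x.

Definition e1 : Mat := delta_mx i0 i0.
Definition e2 : Mat := delta_mx i1 i1.
Definition e3 : Mat := delta_mx i2 i2.
Definition alpha : Mat := delta_mx i0 i1.            (* 2 -> 1 *)
Definition beta  : Mat := 'X *: delta_mx i1 i1.
Definition gamma : Mat := delta_mx i1 i2.            (* 3 -> 2 *)

Definition kQ (x : Mat) : Prop :=
  [/\ x i1 i0 = 0, x i2 i0 = 0, x i2 i1 = 0,
      (size (x i0 i0) <= 1)%N & (size (x i2 i2) <= 1)%N].

(* alpha v gamma = sum_i v_i alpha beta^i gamma, for v in k[beta] *)
Definition avg (v : {poly k}) : Mat :=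
  \sum_(i < size v) kscale v`_i (alpha * beta ^+ i * gamma).

Definition ideal_gen (S : Mat -> Prop) (x : Mat) : Prop :=
  exists (N : nat) (a g b : 'I_N -> Mat),
    (forall j, [/\ kQ (a j), S (g j) & kQ (b j)]) /\
    x = \sum_(j < N) a j * g j * b j.

Definition gensI (n n' n'' : nat) (V : {poly k} -> Prop) (g : Mat) : Prop :=
  [\/ g = alpha * beta ^+ n', g = beta ^+ n, g = beta ^+ n'' * gamma
    | exists v, V v /\ g = avg v].

Definition I_ideal n n' n'' V := ideal_gen (gensI n n' n'' V).

(* A k-linear endomorphism of Lambda is represented by a
   k-linear map f on kQ with f(I) <= I (every linear map of the quotient lifts);
   two lifts represent the same map iff they differ by a map into I. *)
Variable I : Mat -> Prop.

Definition klinear_on_kQ (f : Mat -> Mat) : Prop :=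
  forall (c : k) x y, kQ x -> kQ y -> f (kscale c x + y) = kscale c (f x) + f y.

Definition is_der (f : Mat -> Mat) : Prop :=
  [/\ klinear_on_kQ f,
      (forall x, kQ x -> kQ (f x)),
      (forall x, I x -> I (f x)) &
      (forall x y, kQ x -> kQ y -> I (f (x * y) - (f x * y + x * f y)))].

Definition is_inner (f : Mat -> Mat) : Prop :=
  exists z, kQ z /\ forall x, kQ x -> I (f x - (z * x - x * z)).

Definition lincomb N (c : 'I_N -> k) (D : 'I_N -> Mat -> Mat) (x : Mat) : Mat :=
  \sum_(i < N) kscale (c i) (D i x).

(* dim_k HH^1(Lambda) = dim_k Der(Lambda)/Inn(Lambda) = N : there are N
   derivations whose classes form a basis of Der/Inn. *)
Definition dimHH1 (N : nat) : Prop :=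
  exists D : 'I_N -> Mat -> Mat,
    [/\ forall i, is_der (D i),
        (forall c : 'I_N -> k, is_inner (lincomb c D) -> forall i, c i = 0) &
        (forall f, is_der f -> exists c : 'I_N -> k,
             is_inner (fun x => f x - lincomb c D x))].
End PathAlg.

(* Main.v *)
Require Import Defs.
From HB Require Import structures.
From mathcomp Require Import all_boot all_order all_algebra.
From mathcomp Require Import ring zify.
Set Implicit Arguments. Unset Strict Implicit. Unset Printing Implicit Defensive.
Import GRing.Theory.
Local Open Scope ring_scope.

Section Coord.
Variable k : fieldType.
Local Notation M := (Mat k).
Local Notation P := {poly k}.

Definition mk (a1 q s p r a3 : P) : M :=
  \matrix_(i < 3, j < 3)
    match nat_of_ord i, nat_of_ord j with
    | 0, 0 => a1 | 0, 1 => q | 0, 2 => s | 1, 1 => p | 1, 2 => r | 2, 2 => a3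
    | _, _ => 0 end.

Ltac mxt := apply/matrixP; case => [[|[|[|?]]] ?]; case => [[|[|[|?]]] ?]; rewrite ?mxE //=.

Lemma mk_mul a1 q s p r a3 b1 q' s' p' r' b3 :
  mk a1 q s p r a3 * mk b1 q' s' p' r' b3 =
  mk (a1 * b1) (a1 * q' + q * p') (a1 * s' + q * r' + s * b3) (p * p')
     (p * r' + r * b3) (a3 * b3).
Proof.
apply/matrixP => i j; rewrite -mulmxE !mxE !big_ord_recr big_ord0 /= !mxE.
case: i => [[|[|[|i]]] Hi] //=; case: j => [[|[|[|j]]] Hj] //=;
  rewrite ?mul0r ?mulr0 ?add0r ?addr0 //.
Qed.

Lemma mk_add a1 q s p r a3 b1 q' s' p' r' b3 :
  mk a1 q s p r a3 + mk b1 q' s' p' r' b3 =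
  mk (a1 + b1) (q + q') (s + s') (p + p') (r + r') (a3 + b3).
Proof. by mxt; rewrite addr0. Qed.

Lemma mk_opp a1 q s p r a3 :
  - mk a1 q s p r a3 = mk (- a1) (- q) (- s) (- p) (- r) (- a3).
Proof. by mxt; rewrite oppr0. Qed.

Lemma mk_sub a1 q s p r a3 b1 q' s' p' r' b3 :
  mk a1 q s p r a3 - mk b1 q' s' p' r' b3 =
  mk (a1 - b1) (q - q') (s - s') (p - p') (r - r') (a3 - b3).
Proof. by rewrite mk_opp mk_add. Qed.

Lemma mk_scale c a1 q s p r a3 :
  kscale c (mk a1 q s p r a3) =
  mk (c%:P * a1) (c%:P * q) (c%:P * s) (c%:P * p) (c%:P * r) (c%:P * a3).
Proof. by rewrite /kscale; mxt; rewrite mulr0. Qed.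

Lemma mk0 : mk 0 0 0 0 0 0 = 0.
Proof. by mxt; rewrite mxE. Qed.

Lemma mk1 : mk 1 0 0 1 0 1 = 1.
Proof. by mxt; rewrite mxE. Qed.

Lemma e1E : e1 k = mk 1 0 0 0 0 0. Proof. by rewrite /e1; mxt. Qed.
Lemma e2E : e2 k = mk 0 0 0 1 0 0. Proof. by rewrite /e2; mxt. Qed.
Lemma e3E : e3 k = mk 0 0 0 0 0 1. Proof. by rewrite /e3; mxt. Qed.
Lemma alphaE : alpha k = mk 0 1 0 0 0 0. Proof. by rewrite /alpha; mxt. Qed.
Lemma betaE : beta k = mk 0 0 0 'X 0 0.
Proof. by rewrite /beta; mxt; rewrite ?mulr1 ?mulr0. Qed.
Lemma gammaE : gamma k = mk 0 0 0 0 1 0. Proof. by rewrite /gamma; mxt. Qed.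

Lemma betaXE j : beta k ^+ j.+1 = mk 0 0 0 ('X^(j.+1)) 0 0.
Proof.
elim: j => [|j IH]; first by rewrite expr1 betaE.
rewrite exprS IH betaE mk_mul !(mul0r, mulr0, addr0) -exprS.
by [].
Qed.

Lemma avgE v : avg v = mk 0 0 v 0 0 0.
Proof.
rewrite /avg.
have -> : \sum_(i < size v) kscale v`_i (alpha k * beta k ^+ i * gamma k)
   = \sum_(i < size v) mk 0 0 ((v`_i)%:P * 'X^i) 0 0 0.
  apply: eq_bigr => i _; case: (nat_of_ord i) => [|j].
    by rewrite expr0 mulr1 alphaE gammaE mk_mul mk_scale !(mul0r, mulr0, addr0, add0r, mul1r, mulr1).
  by rewrite betaXE alphaE gammaE !mk_mul mk_scale !(mul0r, mulr0, addr0, add0r, mul1r, mulr1).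
have H : forall (F : 'I_(size v) -> P), \sum_(i < size v) mk 0 0 (F i) 0 0 0 = mk 0 0 (\sum_(i < size v) F i) 0 0 0.
  move=> F; elim/big_ind2: _ => //; first by rewrite mk0.
  by move=> x1 x2 y1 y2 -> ->; rewrite mk_add !addr0.
rewrite H; congr mk; rewrite -[RHS](coefK v) poly_def.
by apply: eq_bigr => i _; rewrite mul_polyC.
Qed.

Definition kQE (x : M) : kQ x -> x = mk (x i0 i0) (x i0 i1) (x i0 i2) (x i1 i1) (x i1 i2) (x i2 i2).
Proof.
case=> h10 h20 h21 _ _; apply/matrixP => i j; rewrite mxE.
case: i => [[|[|[|i]]] Hi] //=; case: j => [[|[|[|j]]] Hj] //=;
 try (by congr (x _ _); apply: val_inj).
- by rewrite -h10; congr (x _ _); apply: val_inj.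
- by rewrite -h20; congr (x _ _); apply: val_inj.
- by rewrite -h21; congr (x _ _); apply: val_inj.
Qed.

Lemma kQ_mk a1 q s p r a3 :
  kQ (mk a1 q s p r a3) <-> (size a1 <= 1)%N /\ (size a3 <= 1)%N.
Proof. by rewrite /kQ !mxE /=; split; [case | case; split]. Qed.

Lemma kQ_mkC a1 q s p r a3 : kQ (mk a1%:P q s p r a3%:P).
Proof. by apply/kQ_mk; rewrite !size_polyC !leq_b1. Qed.
Lemma betaXE' j : (0 < j)%N -> beta k ^+ j = mk 0 0 0 ('X^j) 0 0.
Proof. by move=> hj; rewrite -(prednK hj) betaXE. Qed.


Definition Dgen (u w v : P) (x : M) : M :=
  mk 0 (u * x i0 i1 + (x i0 i1)^`() * w)
       (u * x i0 i2 + (x i0 i2)^`() * w + x i0 i2 * v)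
       ((x i1 i1)^`() * w) ((x i1 i2)^`() * w + x i1 i2 * v) 0.

Lemma Dgen_mk u w v a1 q s p r a3 :
  Dgen u w v (mk a1 q s p r a3) =
  mk 0 (u * q + q^`() * w) (u * s + s^`() * w + s * v) (p^`() * w) (r^`() * w + r * v) 0.
Proof. by rewrite /Dgen !mxE. Qed.

Lemma Dgen_kQ u w v x : kQ (Dgen u w v x).
Proof. by apply/kQ_mk; rewrite size_poly0. Qed.



Lemma Dgen_der u w v c1 q s p r c3 d1 q' s' p' r' d3 :
  let x := mk c1%:P q s p r c3%:P in let y := mk d1%:P q' s' p' r' d3%:P in
  Dgen u w v (x * y) = Dgen u w v x * y + x * Dgen u w v y.
Proof.
rewrite /= mk_mul !Dgen_mk !mk_mul mk_add; congr mk;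
  rewrite ?derivD ?derivM ?derivC; ring.
Qed.

Lemma kQ_const x : kQ x -> x = mk ((x i0 i0)`_0)%:P (x i0 i1) (x i0 i2) (x i1 i1) (x i1 i2) ((x i2 i2)`_0)%:P.
Proof.
move=> hx; have := hx; case=> _ _ _ /size1_polyC h0 /size1_polyC h2.
by rewrite -h0 -h2; apply: kQE.
Qed.

Lemma Dgen_derK u w v x y : kQ x -> kQ y ->
  Dgen u w v (x * y) = Dgen u w v x * y + x * Dgen u w v y.
Proof. by move=> /kQ_const -> /kQ_const ->; apply: Dgen_der. Qed.

Lemma Dgen_lin u w v c x y :
  Dgen u w v (kscale c x + y) = kscale c (Dgen u w v x) + Dgen u w v y.
Proof.
rewrite /Dgen mk_scale mk_add /kscale !mxE; congr mk;
  rewrite ?derivD ?deriv_mulC; ring.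
Qed.

Lemma Dgen_add u1 w1 v1 u2 w2 v2 x :
  Dgen (u1 + u2) (w1 + w2) (v1 + v2) x = Dgen u1 w1 v1 x + Dgen u2 w2 v2 x.
Proof. by rewrite /Dgen mk_add; congr mk; ring. Qed.

Lemma Dgen_scale c u w v x :
  Dgen (c%:P * u) (c%:P * w) (c%:P * v) x = kscale c (Dgen u w v x).
Proof. by rewrite /Dgen mk_scale; congr mk; ring. Qed.

Lemma Dgen_opp u w v x :
  Dgen (- u) (- w) (- v) x = - Dgen u w v x.
Proof. by rewrite /Dgen mk_opp; congr mk; ring. Qed.

Lemma Dgen0 x : Dgen 0 0 0 x = 0.
Proof. by rewrite /Dgen -mk0; congr mk; ring. Qed.



Lemma Dgen_comm (l1 l3 : k) mu x : kQ x ->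
  mk l1%:P 0 0 mu 0 l3%:P * x - x * mk l1%:P 0 0 mu 0 l3%:P = Dgen (l1%:P - mu) 0 (mu - l3%:P) x.
Proof.
move=> /kQ_const ->; rewrite !mk_mul mk_sub Dgen_mk; congr mk; ring.
Qed.

Lemma comm_der (z x y : M) :
  z * (x * y) - x * y * z = (z * x - x * z) * y + x * (z * y - y * z).
Proof.
rewrite mulrBl mulrBr !mulrA addrA; congr (_ + _).
by rewrite -addrA addNr addr0.
Qed.


Lemma kscale1 (x : M) : kscale 1 x = x.
Proof. by rewrite /kscale scale1r. Qed.

Lemma kQ_mul (x y : M) : kQ x -> kQ y -> kQ (x * y).
Proof.
move=> /kQ_const -> /kQ_const ->; rewrite mk_mul -!polyCM; exact: kQ_mkC.
Qed.

Lemma kQ_lin c (x y : M) : kQ x -> kQ y -> kQ (kscale c x + y).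
Proof.
move=> /kQ_const -> /kQ_const ->; rewrite mk_scale mk_add -!polyCM -!polyCD; exact: kQ_mkC.
Qed.

Lemma kQ_add (x y : M) : kQ x -> kQ y -> kQ (x + y).
Proof. by move=> hx hy; rewrite -(kscale1 x); apply: kQ_lin. Qed.

Lemma kQ_opp (x : M) : kQ x -> kQ (- x).
Proof.
move=> /kQ_const ->; rewrite mk_opp -!polyCN; exact: kQ_mkC.
Qed.

Lemma kQ_sub (x y : M) : kQ x -> kQ y -> kQ (x - y).
Proof. by move=> hx hy; apply: kQ_add => //; apply: kQ_opp. Qed.

Lemma kQ_e1 : kQ (e1 k). Proof. by rewrite e1E -polyC1 -polyC0; apply: kQ_mkC. Qed.
Lemma kQ_e2 : kQ (e2 k). Proof. by rewrite e2E -polyC0; apply: kQ_mkC. Qed.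
Lemma kQ_e3 : kQ (e3 k). Proof. by rewrite e3E -polyC1 -polyC0; apply: kQ_mkC. Qed.
Lemma kQ_alpha : kQ (alpha k). Proof. by rewrite alphaE -polyC0; apply: kQ_mkC. Qed.
Lemma kQ_beta : kQ (beta k). Proof. by rewrite betaE -polyC0; apply: kQ_mkC. Qed.
Lemma kQ_gamma : kQ (gamma k). Proof. by rewrite gammaE -polyC0; apply: kQ_mkC. Qed.
Lemma kQ_mk0 q s p r : kQ (mk 0 q s p r 0). Proof. by rewrite -polyC0; apply: kQ_mkC. Qed.

Lemma lin0 (g : M -> M) : klinear_on_kQ g -> g 0 = 0.
Proof.
have kQ0 : kQ (0 : M) by rewrite -mk0; apply: kQ_mk0.
move=> hg; have h := hg 1 0 0 kQ0 kQ0; rewrite !kscale1 addr0 in h.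
by move/(congr1 (fun y => y - g 0)): h; rewrite subrr addrK => <-.
Qed.

End Coord.

Lemma mk_inj (k : fieldType) (a1 q s p r a3 b1 q' s' p' r' b3 : {poly k}) :
  mk a1 q s p r a3 = mk b1 q' s' p' r' b3 ->
  [/\ a1 = b1, q = q', s = s', p = p' & (r = r' /\ a3 = b3)].
Proof.
move=> H.
have E := fun i j => congr1 (fun x : Mat k => x i j) H.
move: (E i0 i0) (E i0 i1) (E i0 i2) (E i1 i1) (E i1 i2) (E i2 i2).
by rewrite !mxE /= => -> -> -> -> -> ->.
Qed.

Lemma dvdXn_le (k : fieldType) i j (p : {poly k}) : (i <= j)%N -> 'X^j %| p -> 'X^i %| p.
Proof. by move=> hij; apply: dvdp_trans; apply: dvdp_exp2l. Qed.


Lemma deriv_dvd (k : fieldType) j (s w : {poly k}) :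
  'X^j %| s -> ('X %| w \/ (j%:R : k) = 0) -> 'X^j %| s^`() * w.
Proof.
case/dvdpP => t -> hw; rewrite derivM derivXn mulrDl.
apply: dvdp_add; first by apply: dvdp_mulr; apply: dvdp_mull; apply: dvdpp.
case: hw => [/dvdpP [w1 ->]| hj].
  case: j => [|j]; first by rewrite mulr0n mulr0 mul0r dvdp0.
  have -> : t * ('X^(j.+1.-1) *+ j.+1) * (w1 * 'X) = (t * w1 *+ j.+1) * 'X^(j.+1).
    rewrite /= exprS -(mulr_natr ('X^j)) -(mulr_natr (t * w1)).
    by move: (_%:R) => N; ring.
  by apply: dvdp_mull; apply: dvdpp.
have -> : 'X^(j.-1) *+ j = 0 :> {poly k}.
  by rewrite -mulr_natr -polyC_natr hj mulr0.
by rewrite mulr0 mul0r dvdp0.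
Qed.

Section Ideal.
Variable k : fieldType.
Local Notation M := (Mat k).
Local Notation P := {poly k}.
Variables n n' n'' e : nat.
Hypothesis hn' : (n' <= n)%N.
Hypothesis hn'' : (n'' <= n)%N.
Hypothesis he' : (e <= n')%N.
Hypothesis he'' : (e <= n'')%N.
Hypothesis hp' : (0 < n')%N.
Hypothesis hp'' : (0 < n'')%N.
Hypothesis hp : (0 < n)%N.

Definition Icm (q s p r : P) :=
  [/\ 'X^n' %| q, 'X^e %| s, 'X^n %| p & 'X^n'' %| r].

Definition Ic (x : M) : Prop :=
  exists q s p r, x = mk 0 q s p r 0 /\ Icm q s p r.

Lemma Ic_mk q s p r : Icm q s p r -> Ic (mk 0 q s p r 0).
Proof. by move=> H; exists q, s, p, r. Qed.

Lemma Ic_mkE a1 q s p r a3 : Ic (mk a1 q s p r a3) -> a1 = 0 /\ a3 = 0 /\ Icm q s p r.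
Proof. by case=> [q' [s' [p' [r' [/mk_inj [-> -> -> -> [-> ->]] H]]]]]. Qed.

Lemma Ic_kQ x : Ic x -> kQ x.
Proof. by case=> [q [s [p [r [-> _]]]]]; apply/kQ_mk; rewrite size_poly0. Qed.

Lemma Ic0 : Ic 0.
Proof. by rewrite -mk0; apply: Ic_mk; split; apply: dvdp0. Qed.

Lemma IcD x y : Ic x -> Ic y -> Ic (x + y).
Proof.
case=> [q [s [p [r [-> [h1 h2 h3 h4]]]]]] [q' [s' [p' [r' [-> [h1' h2' h3' h4']]]]]].
by rewrite mk_add addr0; apply: Ic_mk; split; apply: dvdp_add.
Qed.

Lemma IcB x y : Ic x -> Ic y -> Ic (x - y).
Proof.
case=> [q [s [p [r [-> [h1 h2 h3 h4]]]]]] [q' [s' [p' [r' [-> [h1' h2' h3' h4']]]]]].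
by rewrite mk_sub subr0; apply: Ic_mk; split; apply: dvdp_sub.
Qed.

Lemma IcZ c x : Ic x -> Ic (kscale c x).
Proof.
case=> [q [s [p [r [-> [h1 h2 h3 h4]]]]]].
by rewrite mk_scale mulr0; apply: Ic_mk; split; apply: dvdp_mull.
Qed.

Lemma IcMr x y : Ic x -> kQ y -> Ic (x * y).
Proof.
case=> [q [s [p [r [-> [h1 h2 h3 h4]]]]]] /kQE ->.
rewrite mk_mul !mul0r !add0r; apply: Ic_mk; split.
- exact: dvdp_mulr.
- apply: dvdp_add; last exact: dvdp_mulr.
  by apply: dvdp_mulr; apply: dvdXn_le he' h1.
- exact: dvdp_mulr.
- apply: dvdp_add; last exact: dvdp_mulr.
  by apply: dvdp_mulr; apply: dvdXn_le hn'' h3.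
Qed.

Lemma IcMl x y : Ic x -> kQ y -> Ic (y * x).
Proof.
case=> [q [s [p [r [-> [h1 h2 h3 h4]]]]]] /kQE ->.
rewrite mk_mul !mulr0 !addr0; apply: Ic_mk; split.
- apply: dvdp_add; first exact: dvdp_mull.
  by apply: dvdp_mull; apply: dvdXn_le hn' h3.
- apply: dvdp_add; first exact: dvdp_mull.
  by apply: dvdp_mull; apply: dvdXn_le he'' h4.
- exact: dvdp_mull.
- exact: dvdp_mull.
Qed.

Lemma Ic_ideal x :
  I_ideal n n' n'' (fun v : P => 'X^e %| v) x <-> Ic x.
Proof.
split.
- case=> N [a [g [b [H ->]]]].
  elim/big_ind: _ => //; [exact: Ic0 | exact: IcD |].
  move=> j _; case: (H j) => ha hg hb.
  apply: IcMr => //; apply: IcMl => //.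
  case: hg => [->|->|->|[v [hv ->]]].
  + rewrite alphaE betaXE' // mk_mul; rewrite !(mul0r, mulr0, addr0, add0r, mul1r).
    by apply: Ic_mk; split; rewrite ?dvdp0 ?dvdpp.
  + by rewrite betaXE' //; apply: Ic_mk; split; rewrite ?dvdp0 ?dvdpp.
  + rewrite gammaE betaXE' // mk_mul; rewrite !(mul0r, mulr0, addr0, add0r, mul1r, mulr1).
    by apply: Ic_mk; split; rewrite ?dvdp0 ?dvdpp.
  + by rewrite avgE; apply: Ic_mk; split; rewrite ?dvdp0.
- case=> [q [s [p [r [-> [h1 h2 h3 h4]]]]]].
  case/dvdpP: h1 => tq ->; case/dvdpP: h2 => ts ->.
  case/dvdpP: h3 => tp ->; case/dvdpP: h4 => tr ->.
  pose a (j : 'I_4) : M := if j == 0 :> nat then 1 else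
    if j == 1 :> nat then 1 else if j == 2 :> nat then mk 0 0 0 tr 0 0 else 1.
  pose g (j : 'I_4) : M := if j == 0 :> nat then alpha k * beta k ^+ n' else
    if j == 1 :> nat then beta k ^+ n else if j == 2 :> nat then beta k ^+ n'' * gamma k
    else avg (ts * 'X^e).
  pose b (j : 'I_4) : M := if j == 0 :> nat then mk 0 0 0 tq 0 0 else
    if j == 1 :> nat then mk 0 0 0 tp 0 0 else 1.
  exists 4, a, g, b; split.
  + move=> j; rewrite /a /g /b; case: j => [[|[|[|[|j]]]] Hj] //=; split;
      rewrite -?mk1; try exact: kQ_mkC.
    * by constructor 1.
    * by constructor 2.
    * by constructor 3.
    * constructor 4; exists (ts * 'X^e); split => //; exact: dvdp_mull.
  + rewrite !big_ord_recr big_ord0 /= add0r /a /g /b /=.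
    rewrite betaXE' // betaXE' // betaXE' // alphaE gammaE avgE -mk1 !mk_mul !mk_add.
    by congr mk; ring.
Qed.


Lemma Dgen_Ic u w v x : Ic x ->
  ('X %| w \/ [/\ (n%:R : k) = 0, (n'%:R : k) = 0, (n''%:R : k) = 0 & (e%:R : k) = 0]) ->
  Ic (Dgen u w v x).
Proof.
case=> [q [s [p [r [-> [h1 h2 h3 h4]]]]]] hw; rewrite Dgen_mk; apply: Ic_mk; split.
- apply: dvdp_add; first exact: dvdp_mull.
  by apply: deriv_dvd => //; case: hw => [?|[]]; [left|right].
- apply: dvdp_add; last exact: dvdp_mulr.
  apply: dvdp_add; first exact: dvdp_mull.
  by apply: deriv_dvd => //; case: hw => [?|[]]; [left|right].
- by apply: deriv_dvd => //; case: hw => [?|[]]; [left|right].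
- apply: dvdp_add; last exact: dvdp_mulr.
  by apply: deriv_dvd => //; case: hw => [?|[]]; [left|right].
Qed.

Lemma Dgen_Ic0 u w v x : 'X^n' %| u -> 'X^n %| w -> 'X^n'' %| v -> Ic (Dgen u w v x).
Proof.
move=> hu hw hv; rewrite /Dgen; apply: Ic_mk; split.
- by apply: dvdp_add; [apply: dvdp_mulr | apply: dvdp_mull; apply: dvdXn_le hn' hw].
- apply: dvdp_add; last by apply: dvdp_mull; apply: dvdXn_le he'' hv.
  apply: dvdp_add; first by apply: dvdp_mulr; apply: dvdXn_le he' hu.
  apply: dvdp_mull; apply: dvdXn_le _ hw; exact: leq_trans he' hn'.
- exact: dvdp_mull.
- apply: dvdp_add; first by apply: dvdp_mull; apply: dvdXn_le hn'' hw.
  exact: dvdp_mull.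
Qed.


Lemma gen_lemma (g : M -> M) :
  klinear_on_kQ g ->
  (forall x y, kQ x -> kQ y -> Ic (g (x * y) - (g x * y + x * g y))) ->
  Ic (g (e1 k)) -> Ic (g (e2 k)) -> Ic (g (e3 k)) ->
  Ic (g (alpha k)) -> Ic (g (beta k)) -> Ic (g (gamma k)) ->
  forall x, kQ x -> Ic (g x).
Proof.
move=> hl hd g1 g2 g3 ga gb gc.
pose S x := kQ x /\ Ic (g x).
have SM x y : S x -> S y -> S (x * y).
  case=> hx ix [hy iy]; split; first exact: kQ_mul.
  have := IcD (hd x y hx hy) (IcD (IcMr ix hy) (IcMl iy hx)).
  by rewrite subrK.
have SL c x y : S x -> S y -> S (kscale c x + y).
  case=> hx ix [hy iy]; split; first exact: kQ_lin.
  by rewrite hl //; apply: IcD => //; apply: IcZ.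
have SA x y : S x -> S y -> S (x + y) by move=> *; rewrite -(kscale1 x); apply: SL.
have S0 : S 0 by split; [rewrite -mk0; apply: kQ_mk0 | rewrite lin0 //; apply: Ic0].
have Sg : [/\ S (e1 k), S (e2 k), S (e3 k), S (alpha k) & S (beta k) /\ S (gamma k)].
  by split; [split; [exact: kQ_e1|] | split; [exact: kQ_e2|] | split; [exact: kQ_e3|]
    | split; [exact: kQ_alpha|] | split; split; [exact: kQ_beta| | exact: kQ_gamma|]].
case: Sg => S1 S2 S3 Sa [Sb Sc].
have SP p : S (mk 0 0 0 p 0 0).
  elim/poly_ind: p => [|p c IH]; first by rewrite mk0.
  have -> : mk 0 0 0 (p * 'X + c%:P) 0 0 = kscale c (e2 k) + mk 0 0 0 p 0 0 * beta k.
    by rewrite e2E betaE mk_scale mk_mul mk_add; congr mk; ring.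
  by apply: SL => //; apply: SM.
have SQ p : S (mk 0 p 0 0 0 0).
  elim/poly_ind: p => [|p c IH]; first by rewrite mk0.
  have -> : mk 0 (p * 'X + c%:P) 0 0 0 0 = kscale c (alpha k) + mk 0 p 0 0 0 0 * beta k.
    by rewrite alphaE betaE mk_scale mk_mul mk_add; congr mk; ring.
  by apply: SL => //; apply: SM.
have SR p : S (mk 0 0 0 0 p 0).
  elim/poly_ind: p => [|p c IH]; first by rewrite mk0.
  have -> : mk 0 0 0 0 (p * 'X + c%:P) 0 = kscale c (gamma k) + beta k * mk 0 0 0 0 p 0.
    by rewrite gammaE betaE mk_scale mk_mul mk_add; congr mk; ring.
  by apply: SL => //; apply: SM.
have SS p : S (mk 0 0 p 0 0 0).
  have -> : mk 0 0 p 0 0 0 = alpha k * mk 0 0 0 0 p 0.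
    by rewrite alphaE mk_mul; congr mk; ring.
  by apply: SM.
move=> x /kQ_const ->.
set a1 := _`_0; set a3 := _`_0.
have -> : mk a1%:P (x i0 i1) (x i0 i2) (x i1 i1) (x i1 i2) a3%:P =
  kscale a1 (e1 k) + (kscale a3 (e3 k) + (mk 0 0 0 (x i1 i1) 0 0 +
    (mk 0 (x i0 i1) 0 0 0 0 + (mk 0 0 0 0 (x i1 i2) 0 + mk 0 0 (x i0 i2) 0 0 0)))).
  by rewrite e1E e3E !mk_scale !mk_add; congr mk; ring.
by have [] := SL a1 _ _ S1 (SL a3 _ _ S3 (SA _ _ (SP (x i1 i1)) (SA _ _ (SQ (x i0 i1)) (SA _ _ (SR (x i1 i2)) (SS (x i0 i2)))))).
Qed.

End Ideal.

Lemma eq_dvd (k : fieldType) (d p q : {poly k}) : d %| p -> p = q -> d %| q.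
Proof. by move=> h <-. Qed.

Lemma dvdXn_coef (k : fieldType) j i (p : {poly k}) : 'X^j %| p -> (i < j)%N -> p`_i = 0.
Proof. by case/dvdpP => t -> hij; rewrite coefMXn hij. Qed.

Lemma coef_dvdXn (k : fieldType) j (p : {poly k}) :
  (forall i, (i < j)%N -> p`_i = 0) -> 'X^j %| p.
Proof.
move=> h; rewrite -(poly_take_drop j p).
have -> : take_poly j p = 0.
  by apply/polyP => i; rewrite coef_take_poly coef0; case: ifP => // /h.
by rewrite add0r; apply: dvdp_mull; apply: dvdpp.
Qed.

Lemma natr_gcd0 (k : fieldType) a b :
  (a%:R : k) = 0 -> (b%:R : k) = 0 -> ((gcdn a b)%:R : k) = 0.
Proof.
case: a => [|a] ha hb; first by rewrite gcd0n.
case: (Bezoutl b (ltn0Sn a)) => x _ /dvdnP [t ht].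
have := congr1 (fun y => (y%:R : k)) ht; rewrite /= natrD !natrM ha hb !mulr0.
by rewrite addr0.
Qed.

Lemma natr_dvd0 (k : fieldType) a b : (a %| b)%N -> (a%:R : k) = 0 -> (b%:R : k) = 0.
Proof. by case/dvdnP => t -> h; rewrite natrM h mulr0. Qed.

Lemma zmod_id (V : zmodType) (F L C DZ G : V) :
  F - L - (C + DZ) = (F - C - G) + (G - DZ - L).
Proof.
rewrite opprD !addrA subrK.
by rewrite (addrAC F) (addrAC (F - C)).
Qed.

Lemma lin_comb_id (R : pzRingType) (V : lmodType R) c (a b a' b' : V) :
  (c *: a + b) - (c *: a' + b') = c *: (a - a') + (b - b').
Proof. by rewrite opprD addrACA scalerBr. Qed.

Lemma der_diff_id (R : pzRingType) (x y Fxy Fx Fy Gx Gy : R) :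
  (Fxy - (Gx * y + x * Gy)) - ((Fx - Gx) * y + x * (Fy - Gy)) = Fxy - (Fx * y + x * Fy).
Proof.
rewrite mulrBl mulrBr -addrA; congr (_ + _).
rewrite -opprD; congr (- _).
rewrite [X in _ + X]addrACA addrCA. set A := Gx * y; set B := x * Gy; set C := Fx * y; set D := x * Fy.
rewrite -[A + B + _]addrA (addrCA B) addNKr.
by rewrite addrC subrK.
Qed.


Lemma subDKl (V : zmodType) (x y z : V) : x - (y + z) + y = x - z.
Proof. by rewrite opprD addrA addrAC subrK. Qed.

Lemma subDKr (V : zmodType) (x y z : V) : x - (y + z) + z = x - y.
Proof. by rewrite opprD addrA subrK. Qed.

Lemma eq_P (T : Type) (Pr : T -> Prop) x y : Pr x -> x = y -> Pr y.
Proof. by move=> h <-. Qed.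

Section More.
Variable k : fieldType.
Local Notation M := (Mat k).
Local Notation P := {poly k}.

Ltac mkring := rewrite ?e1E ?e2E ?e3E ?alphaE ?betaE ?gammaE -?mk0 !(mk_mul, mk_opp, mk_add); congr mk; ring.

Lemma ee11 : e1 k * e1 k = e1 k. Proof. mkring. Qed.
Lemma ee22 : e2 k * e2 k = e2 k. Proof. mkring. Qed.
Lemma ee33 : e3 k * e3 k = e3 k. Proof. mkring. Qed.
Lemma ee12 : e1 k * e2 k = 0. Proof. mkring. Qed.
Lemma ee13 : e1 k * e3 k = 0. Proof. mkring. Qed.
Lemma ee21 : e2 k * e1 k = 0. Proof. mkring. Qed.
Lemma ee23 : e2 k * e3 k = 0. Proof. mkring. Qed.
Lemma ee31 : e3 k * e1 k = 0. Proof. mkring. Qed.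
Lemma ee32 : e3 k * e2 k = 0. Proof. mkring. Qed.
Lemma e1a : e1 k * alpha k = alpha k. Proof. mkring. Qed.
Lemma ae2 : alpha k * e2 k = alpha k. Proof. mkring. Qed.
Lemma e2b : e2 k * beta k = beta k. Proof. mkring. Qed.
Lemma be2 : beta k * e2 k = beta k. Proof. mkring. Qed.
Lemma e2g : e2 k * gamma k = gamma k. Proof. mkring. Qed.
Lemma ge3 : gamma k * e3 k = gamma k. Proof. mkring. Qed.

Lemma e1He2 (H : M) : kQ H -> e1 k * H * e2 k = mk 0 (H i0 i1) 0 0 0 0.
Proof. move/kQ_const => ->; rewrite !mxE /=; mkring. Qed.
Lemma e2He2 (H : M) : kQ H -> e2 k * H * e2 k = mk 0 0 0 (H i1 i1) 0 0.
Proof. move/kQ_const => ->; rewrite !mxE /=; mkring. Qed.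
Lemma e2He3 (H : M) : kQ H -> e2 k * H * e3 k = mk 0 0 0 0 (H i1 i2) 0.
Proof. move/kQ_const => ->; rewrite !mxE /=; mkring. Qed.

Lemma Dgen_e1 u w v : Dgen u w v (e1 k) = 0.
Proof. by rewrite e1E Dgen_mk -mk0 !derivC; congr mk; ring. Qed.
Lemma Dgen_e2 u w v : Dgen u w v (e2 k) = 0.
Proof. by rewrite e2E Dgen_mk -mk0 !derivC; congr mk; ring. Qed.
Lemma Dgen_e3 u w v : Dgen u w v (e3 k) = 0.
Proof. by rewrite e3E Dgen_mk -mk0 !derivC; congr mk; ring. Qed.
Lemma Dgen_a u w v : Dgen u w v (alpha k) = mk 0 u 0 0 0 0.
Proof. by rewrite alphaE Dgen_mk !derivC; congr mk; ring. Qed.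
Lemma Dgen_b u w v : Dgen u w v (beta k) = mk 0 0 0 w 0 0.
Proof. by rewrite betaE Dgen_mk !derivC derivX; congr mk; ring. Qed.
Lemma Dgen_g u w v : Dgen u w v (gamma k) = mk 0 0 0 0 v 0.
Proof. by rewrite gammaE Dgen_mk !derivC; congr mk; ring. Qed.

Lemma lin_diff (F G : M -> M) : klinear_on_kQ F -> klinear_on_kQ G ->
  klinear_on_kQ (fun x => F x - G x).
Proof. by move=> hF hG c x y hx hy; rewrite hF // hG // /kscale lin_comb_id. Qed.

Lemma comm_lin (z : M) : klinear_on_kQ (fun x => z * x - x * z).
Proof. by move=> c x y _ _; rewrite /kscale mulrDr mulrDl -scalerAr -scalerAl lin_comb_id. Qed.

Lemma derXn_coef j (p : P) : (0 < j)%N -> ((('X^j)^`()) * p)`_(j.-1) = p`_0 *+ j.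
Proof.
move=> hj; rewrite derivXn mulrnAl coefMn coefXnM ltnn subnn //.
Qed.

End More.

Section Main.
Variable k : fieldType.
Local Notation M := (Mat k).
Local Notation P := {poly k}.
Variables n n' n'' d : nat.
Hypothesis hn2 : (2 <= n)%N.
Hypothesis h1' : (1 <= n')%N.
Hypothesis hn' : (n' <= n)%N.
Hypothesis h1'' : (1 <= n'')%N.
Hypothesis hn'' : (n'' <= n)%N.
Local Notation m := (minn n' n'').
Hypothesis hdm : (d <= m)%N.
Local Notation delta := (gcdn (gcdn n n') n'').
Hypothesis hdelta : (delta %| d)%N.
Local Notation e := (m - d)%N.
Local Notation cc := (if (delta%:R : k) == 0 then 1%N else 0%N).
Local Notation a := (n - 1)%N.
Local Notation b := (m - 1)%N.
Local Notation N := (a + b + cc)%N.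
Local Notation I := (@Ic k n n' n'' e).

Lemma he' : (e <= n')%N. Proof. lia. Qed.
Lemma he'' : (e <= n'')%N. Proof. lia. Qed.

Lemma delta_facts : (delta%:R : k) = 0 ->
  [/\ (n%:R : k) = 0, (n'%:R : k) = 0, (n''%:R : k) = 0 & (e%:R : k) = 0].
Proof.
move=> h; split; apply: natr_dvd0 h.
- exact: dvdn_trans (dvdn_gcdl _ _) (dvdn_gcdl _ _).
- exact: dvdn_trans (dvdn_gcdl _ _) (dvdn_gcdr _ _).
- exact: dvdn_gcdr.
- apply: dvdn_sub => //; rewrite /minn; case: ifP => _.
  + exact: dvdn_trans (dvdn_gcdl _ _) (dvdn_gcdr _ _).
  + exact: dvdn_gcdr.
Qed.

Definition uu (i : 'I_N) : P :=
  if (i < a)%N then 0 else if (i < a + b)%N then 'X^((i - a).+1) else 0.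
Definition ww (i : 'I_N) : P :=
  if (i < a)%N then 'X^(i.+1) else if (i < a + b)%N then 0 else 1.
Definition DD (i : 'I_N) : M -> M := Dgen (uu i) (ww i) 0.

Definition Ut (c : 'I_N -> k) : P := \sum_(i < N) (c i)%:P * uu i.
Definition Wt (c : 'I_N -> k) : P := \sum_(i < N) (c i)%:P * ww i.

Lemma lincombE c x : lincomb c DD x = Dgen (Ut c) (Wt c) 0 x.
Proof.
rewrite /lincomb /Ut /Wt /DD.
apply: (big_rec3 (fun y1 y2 y3 => y1 = Dgen y2 y3 0 x)); first by rewrite Dgen0.
move=> i y1 y2 y3 _ ->.
by rewrite -Dgen_scale -Dgen_add mulr0 addr0.
Qed.

Lemma DD_der i : is_der I (DD i).
Proof.
split.
- by move=> c x y _ _; apply: Dgen_lin.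
- by move=> x _; apply: Dgen_kQ.
- move=> x hx; apply: Dgen_Ic => //; rewrite /ww.
  case: ifP => h1; first by left; rewrite exprS; apply: dvdp_mulr; apply: dvdpp.
  case: ifP => h2; first by left; apply: dvdp0.
  right; apply: delta_facts.
  have := ltn_ord i; move: (nat_of_ord i) h1 h2 => xx h1 h2.
  by case: (eqVneq (delta%:R : k) 0) => // _ hxx; lia.
- move=> x y hx hy; rewrite /DD Dgen_derK // subrr; exact: Ic0.
Qed.

Lemma cc_le1 : (cc <= 1)%N.
Proof. by case: eqP. Qed.

Lemma Wt_low c (i0 : 'I_N) : (i0 < a)%N -> (Wt c)`_(i0.+1) = c i0.
Proof.
move=> hi0; rewrite /Wt coef_sum (bigD1 i0) //= big1 ?addr0.
  by rewrite /ww hi0 coefCM coefXn eqxx mulr1.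
move=> i hne; rewrite coefCM /ww; case: ifP => _; last case: ifP => _.
- rewrite coefXn eqSS; move: hne; rewrite -(inj_eq val_inj) /= eq_sym.
  by move/negbTE ->; rewrite mulr0.
- by rewrite coef0 mulr0.
- by rewrite coefC /= mulr0.
Qed.

Lemma Wt_top c (i0 : 'I_N) : (a + b <= i0)%N -> (Wt c)`_0 = c i0.
Proof.
move=> hi0; rewrite /Wt coef_sum (bigD1 i0) //= big1 ?addr0.
  rewrite /ww; case: ifP => h1; first lia.
  by case: ifP => h2; [lia | rewrite mulr1 coefC].
move=> i hne; rewrite coefCM /ww; case: ifP => _; last case: ifP => h2.
- by rewrite coefXn mulr0.
- by rewrite coef0 mulr0.
- exfalso; move: hne; rewrite -(inj_eq val_inj) /=.
  have := ltn_ord i; have := ltn_ord i0; have := cc_le1.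
  move: h2; move: (nat_of_ord i) (nat_of_ord i0) hi0 => x y; move: cc => c0.
  move=> ? ? ? ? ?; have -> : x = y by lia.
  by rewrite eqxx.
Qed.

Lemma Ut_mid c (i0 : 'I_N) : (a <= i0)%N -> (i0 < a + b)%N ->
  (Ut c)`_((i0 - a).+1) = c i0.
Proof.
move=> ha hb; rewrite /Ut coef_sum (bigD1 i0) //= big1 ?addr0.
  rewrite /uu; case: ifP => h1; first lia.
  by rewrite hb coefCM coefXn eqxx mulr1.
move=> i hne; rewrite coefCM /uu; case: ifP => h1; first by rewrite coef0 mulr0.
case: ifP => h2; last by rewrite coef0 mulr0.
rewrite coefXn eqSS; case: eqP; last by rewrite mulr0.
move=> hh; exfalso; move: hne; rewrite -(inj_eq val_inj) /=.
move: h1 h2 hh ha hb; move: (nat_of_ord i) (nat_of_ord i0) => x y.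
move=> ? ? ? ? ?; have -> : x = y by lia.
by rewrite eqxx.
Qed.

Lemma Ut0 c : (Ut c)`_0 = 0.
Proof.
rewrite /Ut coef_sum big1 // => i _; rewrite coefCM /uu.
case: ifP => _; first by rewrite coef0 mulr0.
by case: ifP => _; rewrite ?coefXn ?coef0 mulr0.
Qed.


Lemma kQ_split (z : M) : kQ z ->
  exists z1 z3 zq zs zp zr, z = mk z1%:P zq zs zp zr z3%:P.
Proof. by move/kQ_const => ->; do 6 eexists. Qed.

Lemma indep c : is_inner I (lincomb c DD) -> forall i, c i = 0.
Proof.
case=> z [hz H].
have Hx x (hx : kQ x) : I (Dgen (Ut c) (Wt c) 0 x - (z * x - x * z)).
  by rewrite -lincombE; apply: H.
case: (kQ_split hz) => z1 [z3 [zq [zs [zp [zr Ez]]]]]; subst z.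
have := Hx _ (kQ_beta k); rewrite betaE Dgen_mk !mk_mul !mk_sub => /Ic_mkE [_ [_ [_ _ hW _]]].
have {}hW : 'X^n %| Wt c.
  apply: (eq_dvd hW). rewrite derivX. ring.
have := Hx _ (kQ_alpha k); rewrite alphaE Dgen_mk !mk_mul !mk_sub => /Ic_mkE [_ [_ [hU _ _ _]]].
have := Hx _ (kQ_gamma k); rewrite gammaE Dgen_mk !mk_mul !mk_sub => /Ic_mkE [_ [_ [_ _ _ hG]]].
have hUW : 'X^m %| Ut c - (z1%:P - z3%:P).
  apply: (eq_dvd (dvdp_add (dvdXn_le (geq_minl _ _) hU) (dvdXn_le (geq_minr _ _) hG))).
  rewrite !derivC. ring.
move=> i.
case: (ltnP i a) => hia.
  rewrite -Wt_low //; apply: (dvdXn_coef hW); lia.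
case: (ltnP i (a + b)) => hib.
  rewrite -Ut_mid //.
  have := dvdXn_coef hUW (_ : ((i - a).+1 < m)%N); rewrite coefB -polyCB coefC /= subr0.
  by apply; lia.
by rewrite -(Wt_top c hib); apply: (dvdXn_coef hW); lia.
Qed.


Lemma IMr (x y : M) : I x -> kQ y -> I (x * y).
Proof. exact: (IcMr hn'' he'). Qed.
Lemma IMl (x y : M) : I x -> kQ y -> I (y * x).
Proof. exact: (IcMl hn' he''). Qed.

Lemma shape (g : M -> M) ea eb t :
  (forall x y, kQ x -> kQ y -> I (g (x * y) - (g x * y + x * g y))) ->
  kQ ea -> kQ eb -> kQ t -> ea * t = t -> t * eb = t ->
  I (g ea) -> I (g eb) -> I (g t - ea * g t * eb).
Proof.
move=> hL ha hb ht eat teb ga gb.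
have L1 := hL _ _ ha ht; rewrite eat in L1.
have L2 := hL _ _ ht hb; rewrite teb in L2.
apply: (eq_P (IcD (IcD L1 (IMr ga ht)) (IMl (IcD L2 (IMl gb ht)) ha))).
by rewrite subDKl subDKr mulrBr !mulrA addrA subrK.
Qed.

Lemma span f : is_der I f -> exists c : 'I_N -> k, is_inner I (fun x => f x - lincomb c DD x).
Proof.
case=> hl hk hI hL.
have hf0 := lin0 hl.
set z := f (e1 k) * e1 k + f (e2 k) * e2 k + f (e3 k) * e3 k.
have hz : kQ z.
  by apply: kQ_add; [apply: kQ_add|]; apply: kQ_mul; try apply: hk;
    first [apply: kQ_e1 | apply: kQ_e2 | apply: kQ_e3].
pose h0 x := f x - (z * x - x * z).
have h0l : klinear_on_kQ h0 := lin_diff hl (comm_lin z).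
have h0L : forall x y, kQ x -> kQ y -> I (h0 (x * y) - (h0 x * y + x * h0 y)).
  move=> x y hx hy; apply: (eq_P (hL x y hx hy)).
  by rewrite /h0 comm_der der_diff_id.
have h0k : forall x, kQ x -> kQ (h0 x).
  by move=> x hx; apply: kQ_sub; [apply: hk | apply: kQ_sub; apply: kQ_mul].
have h0I : forall x, I x -> I (h0 x).
  move=> x hx; have hxk := Ic_kQ hx.
  by apply: IcB; [apply: hI | apply: IcB; [apply: IMl | apply: IMr]].
have k1 := kQ_e1 k; have k2 := kQ_e2 k; have k3 := kQ_e3 k.
case: (kQ_split (hk _ k1)) => A1 [A3 [Aq [As [Ap [Ar EA]]]]].
case: (kQ_split (hk _ k2)) => B1 [B3 [Bq [Bs [Bp [Br EB]]]]].
case: (kQ_split (hk _ k3)) => C1 [C3 [Cq [Cs [Cp [Cr EC]]]]].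
have Rj := fun (j : M) (hj : kQ j) => IcB (Ic0 k n n' n'' e)
  (IcD (IcD (IMr (hL _ _ hj k1) k1) (IMr (hL _ _ hj k2) k2)) (IMr (hL _ _ hj k3) k3)).
have he1 : I (h0 (e1 k)).
  apply: (eq_P (Rj _ k1)).
  rewrite /h0 /z ?ee11 ?ee12 ?ee13 ?ee21 ?ee22 ?ee23 ?ee31 ?ee32 ?ee33 hf0 EA EB EC.
  rewrite ?e1E ?e2E ?e3E -?mk0 !(mk_mul, mk_opp, mk_add); congr mk; ring.
have he2 : I (h0 (e2 k)).
  apply: (eq_P (Rj _ k2)).
  rewrite /h0 /z ?ee11 ?ee12 ?ee13 ?ee21 ?ee22 ?ee23 ?ee31 ?ee32 ?ee33 hf0 EA EB EC.
  rewrite ?e1E ?e2E ?e3E -?mk0 !(mk_mul, mk_opp, mk_add); congr mk; ring.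
have he3 : I (h0 (e3 k)).
  apply: (eq_P (Rj _ k3)).
  rewrite /h0 /z ?ee11 ?ee12 ?ee13 ?ee21 ?ee22 ?ee23 ?ee31 ?ee32 ?ee33 hf0 EA EB EC.
  rewrite ?e1E ?e2E ?e3E -?mk0 !(mk_mul, mk_opp, mk_add); congr mk; ring.
have ha := shape h0L k1 k2 (kQ_alpha k) (e1a k) (ae2 k) he1 he2.
rewrite e1He2 in ha; last exact: h0k (kQ_alpha k).
have hb := shape h0L k2 k2 (kQ_beta k) (e2b k) (be2 k) he2 he2.
rewrite e2He2 in hb; last exact: h0k (kQ_beta k).
have hg := shape h0L k2 k3 (kQ_gamma k) (e2g k) (ge3 k) he2 he3.
rewrite e2He3 in hg; last exact: h0k (kQ_gamma k).
set q := h0 (alpha k) i0 i1 in ha.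
set p := h0 (beta k) i1 i1 in hb.
set r := h0 (gamma k) i1 i2 in hg.
have Hall : forall x, kQ x -> I (h0 x - Dgen q p r x).
  apply: (gen_lemma hn' hn'' he' he'' (g := fun x => h0 x - Dgen q p r x)).
  - exact: lin_diff h0l (fun c x y _ _ => Dgen_lin q p r c x y).
  - move=> x y hx hy; apply: (eq_P (h0L x y hx hy)).
    by rewrite Dgen_derK // der_diff_id.
  - by rewrite Dgen_e1 subr0.
  - by rewrite Dgen_e2 subr0.
  - by rewrite Dgen_e3 subr0.
  - by rewrite Dgen_a.
  - by rewrite Dgen_b.
  - by rewrite Dgen_g.
have hDI : forall x, I x -> I (Dgen q p r x).
  move=> x hx; apply: (eq_P (IcB (h0I x hx) (Hall x (Ic_kQ hx)))).
  by rewrite opprB addrC subrK.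
have c1 : p`_0 *+ n = 0.
  have Hx : I (mk 0 0 0 ('X^n) 0 0) by apply: Ic_mk; split; rewrite ?dvdp0 ?dvdpp.
  have := hDI _ Hx; rewrite Dgen_mk => /Ic_mkE [_ [_ [_ _ h _]]].
  by rewrite -(derXn_coef p (_ : 0 < n)%N) ?(dvdXn_coef h) //; lia.
have c2 : p`_0 *+ n' = 0.
  have Hx : I (mk 0 ('X^n') 0 0 0 0) by apply: Ic_mk; split; rewrite ?dvdp0 ?dvdpp.
  have := hDI _ Hx; rewrite Dgen_mk => /Ic_mkE [_ [_ [h _ _ _]]].
  have := dvdXn_coef h (_ : n'.-1 < n')%N; rewrite coefD coefMXn.
  by rewrite (_ : n'.-1 < n' = true)%N ?add0r ?derXn_coef //; [apply; lia | lia].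
have c3 : p`_0 *+ n'' = 0.
  have Hx : I (mk 0 0 0 0 ('X^n'') 0) by apply: Ic_mk; split; rewrite ?dvdp0 ?dvdpp.
  have := hDI _ Hx; rewrite Dgen_mk => /Ic_mkE [_ [_ [_ _ _ h]]].
  have := dvdXn_coef h (_ : n''.-1 < n'')%N; rewrite coefD coefXnM.
  by rewrite (_ : n''.-1 < n'' = true)%N ?addr0 ?derXn_coef //; [apply; lia | lia].
have hp0 : p`_0 != 0 -> (delta%:R : k) = 0.
  move=> hp.
  have z_ j (hj : p`_0 *+ j = 0) : (j%:R : k) = 0.
    by move: hj; rewrite -(mulr_natr (p`_0)) => /eqP; rewrite mulf_eq0 (negbTE hp) => /eqP.
  by apply: natr_gcd0; [apply: natr_gcd0|]; apply: z_.
pose S := q + r.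
pose c (i : 'I_N) : k := if (i < a)%N then p`_(i.+1)
  else if (i < a + b)%N then S`_((i - a).+1) else p`_0.
exists c.
have hW : 'X^n %| p - 0 - Wt c.
  apply: coef_dvdXn => j hj; rewrite !coefB coef0 subr0.
  case: j hj => [|j] hj.
    have W0 : (Wt c)`_0 = p`_0 *+ cc.
      rewrite /Wt coef_sum (@big_split_ord _ _ _ (a + b) cc).
      rewrite big1; last first.
        move=> i _; rewrite coefCM /ww.
        have -> : nat_of_ord (lshift cc i) = nat_of_ord i by [].
        case: (i < a)%N; first by rewrite coefXn mulr0.
        by rewrite ltn_ord coef0 mulr0.
      rewrite (eq_bigr (fun _ => p`_0)); last first.
        move=> i _; rewrite coefCM /ww /c.
        have -> : nat_of_ord (rshift (a + b) i) = (a + b + i)%N by [].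
        have -> : (a + b + i < a)%N = false by lia.
        have -> : (a + b + i < a + b)%N = false by lia.
        by rewrite coefC mulr1.
      by rewrite Monoid.mul1m sumr_const card_ord.
    rewrite W0.
    case: (eqVneq (delta%:R : k) 0) => hd'; first by rewrite mulr1n subrr.
    rewrite mulr0n subr0; case: (eqVneq p`_0 0) => // /hp0 hd0.
    by rewrite hd0 eqxx in hd'.
  have hja : (j < a)%N by lia.
  have hj' : (j < N)%N by rewrite ltn_addr // ltn_addr.
  by rewrite (@Wt_low c (Ordinal hj')) //= /c /= hja subrr.
pose R := S - Ut c - (S`_0)%:P.
have hR : 'X^m %| R.
  apply: coef_dvdXn => j hj; rewrite /R !coefB coefC.
  case: j hj => [|j] hj; first by rewrite Ut0 /= subr0 subrr.
  have hjb : (a + j < a + b)%N by lia.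
  have hj' : (a + j < N)%N by rewrite ltn_addr.
  have := @Ut_mid c (Ordinal hj') (leq_addr _ _) hjb; rewrite /= addKn => ->.
  rewrite /c /= hjb (_ : (a + j < a)%N = false) ?addKn ?subrr ?subr0 //; lia.
pose mu := if (n' <= n'')%N then r else r - R.
pose Z' := mk (S`_0)%:P 0 0 mu 0 (0 : k)%:P.
exists (z + Z'); split; first by apply: kQ_add hz (kQ_mkC _ _ _ _ _ _).
move=> x hx /=.
have E : (z + Z') * x - x * (z + Z') = (z * x - x * z) + (Z' * x - x * Z').
  by rewrite mulrDl mulrDr opprD addrACA.
rewrite lincombE E Dgen_comm // (zmod_id _ _ _ _ (Dgen q p r x)).
apply: IcD; first exact: Hall x hx.
rewrite -!Dgen_opp -!Dgen_add.
apply: (Dgen_Ic0 hn' hn'' he' he'').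
- rewrite /mu; case: ifP => hnn.
    have hR' : 'X^n' %| R by move: hR; rewrite (minn_idPl hnn).
    by apply: (eq_dvd hR'); rewrite /R /S; ring.
  by apply: (eq_dvd (dvdp0 _)); rewrite /R /S; ring.
- by apply: (eq_dvd hW); ring.
- rewrite /mu; case: ifP => hnn.
    by apply: (eq_dvd (dvdp0 _)); ring.
  have hR' : 'X^n'' %| R.
    by move: hR; rewrite (minn_idPr _); [| apply: ltnW; rewrite ltnNge hnn].
  by apply: (eq_dvd hR'); ring.
Qed.


Lemma main_dim : dimHH1 I N.
Proof. by exists DD; split; [exact: DD_der | exact: indep | exact: span]. Qed.

End Main.

From Stdlib Require Import FunctionalExtensionality PropExtensionality.
Unset Implicit Arguments.

Theorem mainTheorem8 (k : fieldType) (n n' n'' d : nat) :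
  (2 <= n)%N -> (1 <= n')%N -> (n' <= n)%N -> (1 <= n'')%N -> (n'' <= n)%N ->
  let m := minn n' n'' in
  (d <= m)%N ->
  let V := fun v : {poly k} => 'X ^+ (m - d) %| v in
  let delta := gcdn (gcdn n n') n'' in
  (delta %| d)%N ->
  let c := if (delta%:R : k) == 0 then 1%N else 0%N in
  let I := I_ideal n n' n'' V in
  dimHH1 I ((n - 1) + (m - 1) + c)%N /\ (0 < (n - 1) + (m - 1) + c)%N /\
  (m = 1%N -> dimHH1 I (n - 1)%N).
Proof.
move=> hn2 h1' hn' h1'' hn'' m hdm V delta hdelta c I.
have he' : (m - d <= n')%N by rewrite /m; lia.
have he'' : (m - d <= n'')%N by rewrite /m; lia.
have EI : I = Ic n n' n'' (m - d).
  apply: functional_extensionality => x; apply: propositional_extensionality.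
  by apply: Ic_ideal => //; lia.
have Hmain : dimHH1 I ((n - 1) + (m - 1) + c)%N.
  by rewrite EI; apply: main_dim.
split => //; split; first lia.
move=> hm1.
have hd1 : (delta %| m)%N.
  rewrite /m /minn; case: ifP => _.
  - exact: dvdn_trans (dvdn_gcdl _ _) (dvdn_gcdr _ _).
  - exact: dvdn_gcdr.
rewrite hm1 dvdn1 in hd1.
have c0 : c = 0%N by rewrite /c (eqP hd1) oner_eq0.
suff -> : (n - 1 = (n - 1) + (m - 1) + c)%N by [].
by rewrite c0 hm1 subnn !addn0.
Qed.
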